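(* Let $c\in\mathbb{Z}^n$ be a point with at least one positive and at least one negative coordinate. Then there exists a basis $\xi_1,\dots,\xi_n$ of the vector space $\mathbb{R}^n$ such that $\xi_i\in\mathbb{Z}^n_{\ge0}$ for $i=1,\dots,n$ and $\langle\xi_i,c\rangle=0$ for $i=1,\dots,n-1$.
   Context: $\langle\cdot,\cdot\rangle$ denotes the standard scalar product. *)

(* Defs.v *)
From HB Require Import structures.
From mathcomp Require Import all_boot all_order all_algebra.
From mathcomp Require Import reals.
Set Implicit Arguments. Unset Strict Implicit. Unset Printing Implicit Defensive.
Import Order.TTheory GRing.Theory Num.Theory.

(* Main.v *)
Require Import Defs.
From HB Require Import structures.
From mathcomp Require Import all_boot all_order all_algebra.
From mathcomp Require Import reals.
From mathcomp Require Import perm ring.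
Import Order.TTheory GRing.Theory Num.Theory.
Local Open Scope ring_scope.

Lemma indep_lem (F : fieldType) n (N : 'M[F]_n) (p q : 'I_n) (pq : p != q)
  (C1 : forall k j, k != p -> k != q -> j != k -> N j k = 0)
  (Cd : forall k, N k k != 0) (Cqp : N q p = 0) : row_free N.
Proof.
rewrite -kermx_eq0; apply/rowV0P => v /sub_kermxP vN.
have col k : \sum_j v 0 j * N j k = 0.
  by have := congr1 (fun A : 'rV[F]_n => A 0 k) vN; rewrite !mxE.
have s1 k : k != p -> k != q -> v 0 k = 0.
  move=> kp kq; have := col k; rewrite (bigD1 k) //= big1 ?addr0.
    by move/eqP; rewrite mulf_eq0 (negbTE (Cd k)) orbF => /eqP.
  by move=> j jk; rewrite C1 // mulr0.
have s2 : v 0 p = 0.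
  have := col p; rewrite (bigD1 p) //= big1 ?addr0.
    by move/eqP; rewrite mulf_eq0 (negbTE (Cd p)) orbF => /eqP.
  move=> j jp; have [->|jq] := eqVneq j q; first by rewrite Cqp mulr0.
  by rewrite s1 // mul0r.
have s3 : v 0 q = 0.
  have := col q; rewrite (bigD1 q) //= big1 ?addr0.
    by move/eqP; rewrite mulf_eq0 (negbTE (Cd q)) orbF => /eqP.
  move=> j jq; have [->|jp] := eqVneq j p; first by rewrite s2 mul0r.
  by rewrite s1 // mul0r.
apply/rowP => k; rewrite mxE.
have [->|kp] := eqVneq k p; first by [].
have [->|kq] := eqVneq k q; first by [].
by rewrite s1.
Qed.

Lemma sum_delta n (j : 'I_n) (f : 'I_n -> int) :
  \sum_k (k == j)%:R * f k = f j.
Proof.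
rewrite (bigD1 j) //= eqxx mul1r big1 ?addr0 // => k /negbTE ->.
by rewrite mul0r.
Qed.

(* The rows xi i of Xi are the vectors xi_1..xi_n (row i : 'I_n is xi_{i+1}). *)
Theorem lemma2p3 (R : realType) (n : nat) (c : 'rV[int]_n)
  (hpos : exists i : 'I_n, 0 < c 0 i)
  (hneg : exists i : 'I_n, c 0 i < 0) :
  exists Xi : 'M[int]_n,
    row_free (map_mx (fun z : int => z%:~R : R) Xi)
    /\ (forall i j : 'I_n, 0 <= Xi i j)
    /\ (forall i : 'I_n, (i.+1 < n)%N -> \sum_(j < n) Xi i j * c 0 j = 0).
Proof.
case: n c hpos hneg => [|n] c [p hp] [q hq]; first by case: p hp.
set a := c 0 p. set b := - c 0 q.
have ha : 0 < a by [].
have hb : 0 < b by rewrite oppr_gt0.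
have pq : p != q by apply/eqP => E; move: hq; rewrite -E; move: hp; case: ltrgtP.
pose cp j := if 0 <= c 0 j then c 0 j else 0.
pose cn j := if 0 <= c 0 j then 0 else - c 0 j.
have cp0 j : 0 <= cp j by rewrite /cp; case: ifP.
have cn0 j : 0 <= cn j by rewrite /cn; case: ifP => // /negbT; rewrite -ltNge oppr_ge0 => /ltW.
pose M := (\matrix_(j, k) (if j == q then (k == q)%:R else
   (k == j)%:R * (a * b) + (k == p)%:R * (b * cn j) + (k == q)%:R * (a * cp j)) : 'M[int]_n.+1).
pose s := (tperm q ord_max : 'S_n.+1).
exists (row_perm s M); split; last split.
- have -> : map_mx (fun z : int => z%:~R : R) (row_perm s M)
     = row_perm s (map_mx (fun z : int => z%:~R : R) M).
    by apply/matrixP => i j; rewrite !mxE.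
  rewrite row_free_unit row_permE unitmx_mul unitmx_perm /= -row_free_unit.
  apply: (@indep_lem R _ _ p q pq).
  + move=> k j kp kq jk; rewrite !mxE.
    case: eqP => _; first by rewrite (negbTE kq).
    by rewrite (negbTE kp) (negbTE kq) eq_sym (negbTE jk) !mul0r !addr0.
  + move=> k; rewrite /M !mxE intr_eq0; case: ifP => [/eqP->|/negbT kq]; first by rewrite eqxx.
    rewrite (negbTE kq) eqxx mul1r; apply/lt0r_neq0; rewrite -addrA ltr_wpDr ?mulr_gt0 //.
    by rewrite addr_ge0 // mulr_ge0 // ?ler0n // mulr_ge0 // ltW.
  + by rewrite !mxE eqxx (negbTE pq).
- move=> i j; rewrite !mxE; case: ifP => _; first by rewrite ler0n.
  rewrite !addr_ge0 // !mulr_ge0 ?ler0n // ltW //.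
- move=> i hi.
  have hsi : s i != q.
    apply/eqP => E; move: hi; rewrite -(tpermR q (ord_max : 'I_n.+1)) in E.
    by move/perm_inj: E => ->; rewrite /= ltnn.
  under eq_bigr => k _ do rewrite !mxE (negbTE hsi) !mulrDl -!mulrA.
  rewrite !big_split /= !sum_delta.
  rewrite /cp /cn /b /a; case: ifP => _; ring.
Qed.
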